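(* Let $0<\alpha\le\delta<\infty$ and let $p\in\mathcal M_1^+$ with $a(p)\in X_{\alpha,\delta}$. Then for all $0\le q\le q'\le1$ one has $a(\mathcal R_q(p))_k\le a(\mathcal R_{q'}(p))_k$ for all $k\in\mathbb N_0$. In particular, $a(\mathcal R_q(p))\in X_{\alpha,\delta}$ for all $0\le q\le1$.
   Context: $\mathcal M_1^+$ is the set of probability measures on $\mathbb N_0$, identified with nonnegative sequences summing to $1$. For $q\in[0,1]$, $$T^{(q)}_{ij,k\ell}=C^{(q)}_{k\ell}\,\delta_{i+j,k+\ell}\,(1+\min\{k,\ell,i,j\})\,q^{\max\{0,\ \min\{k,\ell\}-\min\{i,j\}\}},$$ with $0^0=1$ and $C^{(q)}_{k\ell}>0$ chosen so that $\sum_{i,j\ge0}T^{(q)}_{ij,k\ell}=1$; $\mathcal R_q(p)_i=\sum_{j,k,\ell\ge0}T^{(q)}_{ij,k\ell}p_kp_\ell$. For $p\in\mathcal M_1^+$, $a(p)_k=\frac{1}{k+1}\sum_{\ell\ge k}\binom{\ell}{k}p_\ell\in[0,\infty]$. $X_{\alpha,\delta}$ is the set of real sequences $a$ with $a_0=1$, $a_1=\alpha$, $0\le a_k\le\delta^k$ for $k\ge2$. *)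

(* Defs.v *)
(* R : realType, extended reals \bar R for
   nonnegative infinite series (which always exist in [0, +oo]). *)
From mathcomp Require Import all_boot all_order all_algebra.
From mathcomp Require Import all_classical all_reals all_analysis.
Set Implicit Arguments. Unset Strict Implicit. Unset Printing Implicit Defensive.
Import Order.TTheory GRing.Theory Num.Theory.
Local Open Scope ring_scope.
Local Open Scope ereal_scope.

Section Defs.
Variable R : realType.

(* unnormalized weight: delta_{i+j,k+l} (1+min{k,l,i,j}) q^{max(0, min{k,l}-min{i,j})};
   truncated nat subtraction gives max{0,.}, and q ^+ 0 = 1 (so 0^0 = 1). *)
Definition Tw (q : R) (i j k l : nat) : R :=
  (i + j == k + l)%N%:R * (1 + minn (minn k l) (minn i j))%N%:R
  * q ^+ (minn k l - minn i j)%N.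

(* normalizing constant: sum_{i,j>=0} of the weight equals 1/C; only
   i,j <= k+l contribute because of the Kronecker delta. *)
Definition Cq (q : R) (k l : nat) : R :=
  (\sum_(i < (k + l).+1) \sum_(j < (k + l).+1) Tw q i j k l)^-1.

Definition T (q : R) (i j k l : nat) : R := Cq q k l * Tw q i j k l.

Definition M1plus (p : nat -> R) : Prop :=
  (forall n, (0 <= p n)%R) /\ \sum_(n <oo) (p n)%:E = 1.

Definition Rq (q : R) (p : nat -> R) (i : nat) : \bar R :=
  \sum_(j <oo) \sum_(k <oo) \sum_(l <oo) (T q i j k l * p k * p l)%:E.

Definition aseq (p : nat -> \bar R) (k : nat) : \bar R :=
  ((k.+1%:R)^-1)%:E * \sum_(k <= l <oo) ('C(l, k)%:R)%:E * p l.

Definition Xad (alpha delta : R) (a : nat -> \bar R) : Prop :=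
  a 0%N = 1 /\ a 1%N = alpha%:E /\
  (forall k, (2 <= k)%N -> 0 <= a k /\ a k <= (delta ^+ k)%:E).

End Defs.

(* Main.v *)
Require Import Defs.
From mathcomp Require Import all_boot all_order all_algebra.
From mathcomp Require Import all_classical all_reals all_analysis.
Import Order.TTheory GRing.Theory Num.Theory.
Local Open Scope ring_scope.
Local Open Scope ereal_scope.

From mathcomp Require Import zify ring lra.

Module Helpers.
Set Implicit Arguments. Unset Strict Implicit.
Local Open Scope ring_scope.
Lemma bin_step n s kk : (s.+1 <= n - s.+1)%N ->
  ('C(s.+1, kk) + 'C(n - s.+1, kk) <= 'C(s, kk) + 'C(n - s, kk))%N.
Proof.
move=> h; case: kk => [|k1]; first by rewrite !bin0.
have -> : (n - s = (n - s.+1).+1)%N by lia.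
rewrite !binS.
have := @leq_bin2l s (n - s.+1) k1 (ltnW h). lia.
Qed.

Lemma bin_conv n s s' kk : (s <= s')%N -> (s' <= n - s')%N ->
  ('C(s', kk) + 'C(n - s', kk) <= 'C(s, kk) + 'C(n - s, kk))%N.
Proof.
move=> h; rewrite -(subnKC h); move: (s' - s)%N => d; elim: d => [|d IH].
  by rewrite addn0.
move=> h2; rewrite addnS in h2 *.
have h3 : (s + d <= n - (s + d))%N by lia.
exact: leq_trans (bin_step kk h2) (IH h3).
Qed.

Lemma bin_sym_min n i kk : (i <= n)%N ->
  ('C(i, kk) + 'C(n - i, kk) = 'C(minn i (n - i), kk) + 'C(n - minn i (n - i), kk))%N.
Proof.
move=> h; case: (leqP i (n - i)) => h2.
  by [].
by rewrite subKn // addnC.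
Qed.

Lemma dconv n i j kk : (i <= n)%N -> (j <= n)%N ->
  (minn i (n - i) <= minn j (n - j))%N ->
  ('C(j, kk) + 'C(n - j, kk) <= 'C(i, kk) + 'C(n - i, kk))%N.
Proof.
move=> hi hj h; rewrite (bin_sym_min kk hi) (bin_sym_min kk hj).
apply: bin_conv => //; lia.
Qed.

Lemma hockey k j : (\sum_(x < k.+1) 'C(x, j) = 'C(k.+1, j.+1))%N.
Proof.
elim: k => [|k IH]; first by rewrite big_ord1 binS bin0n /=.
by rewrite big_ord_recr /= IH [in RHS]binS.
Qed.

Lemma sum_single_nat (f : nat -> nat) n a : (a < n.+1)%N ->
  (forall j, j != a -> f j = 0%N) -> (\sum_(j < n.+1) f j = f a)%N.
Proof.
move=> an H; rewrite (bigD1 (Ordinal an)) //= big1 ?addn0 // => j /eqP ne.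
apply: H; apply/eqP => E; apply: ne; exact: val_inj.
Qed.

Lemma cnt_y x i l : (\sum_(y < l.+1) (x + y == i) = ((x <= i) && (i - x <= l)))%N.
Proof.
have [/andP [h1 h2]| h] := boolP ((x <= i) && (i - x <= l))%N.
- rewrite (@sum_single_nat (fun y => nat_of_bool (x + y == i)) l (i - x)); last 2 first.
  + lia.
  + move=> j /eqP ne; apply/eqP; rewrite eqb0; apply/eqP; lia.
  by apply/eqP; lia.
- rewrite big1 // => j _; apply/eqP; rewrite eqb0; apply/eqP => E.
  move: h; rewrite -E; have -> : (x + j - x = j)%N by lia.
  by rewrite leq_addr -ltnS ltn_ord.
Qed.

Lemma cnt_x k l i :
  (\sum_(x < k.+1) ((x <= i) && (i - x <= l)) = (minn k i).+1 - (i - l))%N.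
Proof.
elim: k => [|k IH].
  rewrite big_ord1 /=; case: (leqP i l) => h; lia.
rewrite big_ord_recr /= IH.
have [/andP [h1 h2]| h] := boolP ((k.+1 <= i) && (i - k.+1 <= l))%N.
  rewrite /=; lia.
move: h; rewrite negb_and -!ltnNge => /orP [h|h] /=; lia.
Qed.

Lemma sum_conv (f : nat -> nat) k l :
  (\sum_(x < k.+1) \sum_(y < l.+1) f (x + y) =
   \sum_(i < (k + l).+1) f i * (1 + minn (minn k l) (minn i (k + l - i))))%N.
Proof.
transitivity (\sum_(x < k.+1) \sum_(y < l.+1) \sum_(i < (k + l).+1) ((x + y == i) * f i))%N.
  apply: eq_bigr => x _; apply: eq_bigr => y _.
  rewrite (@sum_single_nat (fun i => (x + y == i) * f i) _ (x + y))%N.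
  - by rewrite eqxx mul1n.
  - have := ltn_ord x; have := ltn_ord y; lia.
  - by move=> j ne; rewrite eq_sym (negbTE ne).
rewrite (eq_bigr (fun x : 'I_k.+1 => \sum_(i < (k + l).+1) \sum_(y < l.+1) ((x + y == i) * f i))%N);
  last by move=> x _; rewrite exchange_big.
rewrite exchange_big /=; apply: eq_bigr => i _.
rewrite (eq_bigr (fun x : 'I_k.+1 => (\sum_(y < l.+1) (x + y == i)) * f i)%N);
  last by move=> x _; rewrite big_distrl.
rewrite -big_distrl /= mulnC; congr (_ * _)%N.
under eq_bigr do rewrite cnt_y.
rewrite cnt_x; have := ltn_ord i; lia.
Qed.

Section Real.
Variable R : realType.
Implicit Types q : R.

Lemma sum_single (f : nat -> R) n a : (a < n.+1)%N ->
  (forall j, j != a -> f j = 0) -> \sum_(j < n.+1) f j = f a.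
Proof.
move=> an H; rewrite (bigD1 (Ordinal an)) //= big1 ?addr0 // => j /eqP ne.
apply: H; apply/eqP => E; apply: ne; exact: val_inj.
Qed.

Definition W q (k l i : nat) : R :=
  (1 + minn (minn k l) (minn i (k + l - i)))%N%:R * q ^+ (minn k l - minn i (k + l - i)).
Definition Dn q k l := \sum_(i < (k + l).+1) W q k l i.
Definition Fq q kk k l :=
  \sum_(i < (k + l).+1) \sum_(j < (k + l).+1) 'C(i, kk)%:R * T q i j k l.

Lemma Tw0 q i j k l : (i + j != k + l)%N -> Tw q i j k l = 0.
Proof. by rewrite /Tw => /negbTE ->; rewrite !mul0r. Qed.

Lemma Tw_W q i k l : (i <= k + l)%N -> Tw q i (k + l - i) k l = W q k l i.
Proof. by move=> h; rewrite /Tw /W subnKC // eqxx mul1r. Qed.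

Lemma sumTw q i k l : (i <= k + l)%N ->
  \sum_(j < (k + l).+1) Tw q i j k l = W q k l i.
Proof.
move=> h; rewrite (@sum_single (fun j => Tw q i j k l) _ (k + l - i)).
- exact: Tw_W.
- lia.
- move=> j ne; apply: Tw0; apply/eqP; move/eqP: ne; lia.
Qed.

Lemma Cq_D q k l : Cq q k l = (Dn q k l)^-1.
Proof.
rewrite /Cq /Dn; congr (_^-1); apply: eq_bigr => i _.
by rewrite sumTw // -ltnS ltn_ord.
Qed.

Lemma Fq_E q kk k l :
  Fq q kk k l = (\sum_(i < (k + l).+1) 'C(i, kk)%:R * W q k l i) / Dn q k l.
Proof.
rewrite /Fq mulr_suml; apply: eq_bigr => i _.
have hi : (i <= k + l)%N by rewrite -ltnS ltn_ord.
rewrite /T -Cq_D.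
under eq_bigr do rewrite mulrCA.
by rewrite -mulr_sumr -mulr_sumr sumTw // mulrC.
Qed.

Lemma W_ge0 q k l i : 0 <= q -> 0 <= W q k l i.
Proof. by move=> q0; rewrite /W mulr_ge0 // exprn_ge0. Qed.

Lemma W_sym q k l i : (i <= k + l)%N -> W q k l (k + l - i) = W q k l i.
Proof. by move=> h; rewrite /W subKn // (minnC i). Qed.

Lemma Dn_gt0 q k l : 0 <= q -> 0 < Dn q k l.
Proof.
move=> q0; have hk : (k < (k + l).+1)%N by lia.
rewrite /Dn (bigD1 (Ordinal hk)) //=.
apply: (@lt_le_trans _ _ (W q k l k)).
  rewrite /W; have -> : (k + l - k = l)%N by lia.
  by rewrite minnn subnn expr0 mulr1 ltr0n.
by rewrite lerDl sumr_ge0 // => i _; exact: W_ge0.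
Qed.


Lemma pow_swap q q' e e' : 0 <= q -> q <= q' -> (e' <= e)%N ->
  q ^+ e * q' ^+ e' <= q' ^+ e * q ^+ e'.
Proof.
move=> q0 qq he; rewrite -(subnK he) !exprD.
have q'0 : 0 <= q' by apply: le_trans qq.
rewrite -!mulrA [q' ^+ e' * q ^+ e']mulrC.
apply: ler_wpM2r; first by rewrite mulr_ge0 // exprn_ge0.
by apply: lerXn2r.
Qed.

Lemma antisym_sum N (d : 'I_N -> R) (A : 'I_N -> 'I_N -> R) :
  (forall i j, A j i = - A i j) -> (forall i j, (d i - d j) * A i j <= 0) ->
  \sum_i \sum_j d i * A i j <= 0.
Proof.
move=> hA hs.
have E : \sum_i \sum_j d i * A i j = - \sum_i \sum_j d j * A i j.
  rewrite exchange_big /= -sumrN; apply: eq_bigr => i _.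
  rewrite -sumrN; apply: eq_bigr => j _; by rewrite hA mulrN.
have : \sum_i \sum_j d i * A i j + \sum_i \sum_j d i * A i j <= 0.
  rewrite {2}E -sumrB; apply: sumr_le0 => i _.
  rewrite -sumrB; apply: sumr_le0 => j _; by rewrite -mulrBl.
lra.
Qed.

Lemma cross M (e w w' : 'I_M -> R) :
  (\sum_i e i * w i) * (\sum_j w' j) - (\sum_i e i * w' i) * (\sum_j w j) =
  \sum_i \sum_j e i * (w i * w' j - w' i * w j).
Proof.
rewrite !mulr_suml -sumrB; apply: eq_bigr => i _.
rewrite !mulr_sumr -sumrB; apply: eq_bigr => j _; ring.
Qed.

Lemma W_A q q' k l (i j : nat) : 0 <= q -> q <= q' ->
  (minn i (k + l - i) <= minn j (k + l - j))%N ->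
  W q k l i * W q' k l j - W q' k l i * W q k l j <= 0.
Proof.
move=> q0 qq h; rewrite /W.
set gi := ((1 + _)%N%:R : R); set gj := ((1 + _)%N%:R : R).
set ei := (minn k l - minn i _)%N; set ej := (minn k l - minn j _)%N.
have hg : 0 <= gi * gj by rewrite mulr_ge0.
have he : (ej <= ei)%N by rewrite /ei /ej leq_sub2l.
have := pow_swap q0 qq he.
have -> : gi * q ^+ ei * (gj * q' ^+ ej) - gi * q' ^+ ei * (gj * q ^+ ej) =
  (gi * gj) * (q ^+ ei * q' ^+ ej - q' ^+ ei * q ^+ ej) by ring.
move=> H; apply: mulr_ge0_le0 => //; lra.
Qed.

Lemma Fq_mono q q' kk k l : 0 <= q -> q <= q' -> Fq q kk k l <= Fq q' kk k l.
Proof.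
move=> q0 qq; have q'0 : 0 <= q' by apply: le_trans qq.
rewrite !Fq_E.
set n := (k + l)%N.
have D0 := Dn_gt0 k l q0; have D0' := Dn_gt0 k l q'0.
rewrite ler_pdivrMr // mulrAC ler_pdivlMr //.
set c := fun i : 'I_n.+1 => ('C(i, kk)%:R : R).
set c' := fun i : 'I_n.+1 => ('C(n - i, kk)%:R : R).
set w := fun i : 'I_n.+1 => W q k l i.
set w' := fun i : 'I_n.+1 => W q' k l i.
have sym r : 0 <= r -> \sum_(i < n.+1) c i * W r k l i = \sum_(i < n.+1) c' i * W r k l i.
  move=> _; rewrite (reindex_inj rev_ord_inj) /=; apply: eq_bigr => i _.
  rewrite /c /c' /= subSS W_sym; last by rewrite /n -ltnS ltn_ord.
  by [].
suff : (\sum_i c i * w i) * (\sum_j w' j) - (\sum_i c i * w' i) * (\sum_j w j) <= 0.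
  by rewrite /Dn /c /w /w' /=; lra.
have E1 := cross c w w'.
have E2 := cross c' w w'.
have s1 : \sum_i c' i * w i = \sum_i c i * w i by rewrite /w sym.
have s2 : \sum_i c' i * w' i = \sum_i c i * w' i by rewrite /w' sym.
rewrite s1 s2 in E2.
have : \sum_i \sum_j (c i + c' i) * (w i * w' j - w' i * w j) <= 0.
  apply: antisym_sum.
    move=> i j; ring.
  move=> i j.
  have hi : (i <= n)%N by rewrite -ltnS ltn_ord.
  have hj : (j <= n)%N by rewrite -ltnS ltn_ord.
  rewrite /c /c' /w /w' -!natrD.
  case: (leqP (minn i (n - i)) (minn j (n - j))) => h.
    apply: mulr_ge0_le0; first by rewrite subr_ge0 ler_nat dconv.
    exact: W_A.
  apply: mulr_le0_ge0; first by rewrite subr_le0 ler_nat dconv // ltnW.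
  have := W_A (k:=k) (l:=l) q0 qq (ltnW h); lra.
have -> : \sum_i \sum_j (c i + c' i) * (w i * w' j - w' i * w j) =
  \sum_i \sum_j c i * (w i * w' j - w' i * w j) + \sum_i \sum_j c' i * (w i * w' j - w' i * w j).
  rewrite -big_split /=; apply: eq_bigr => i _; rewrite -big_split /=.
  by apply: eq_bigr => j _; rewrite mulrDl.
rewrite -E1 -E2 /w /w'; lra.
Qed.


Lemma rev_sum q k l (f : nat -> R) :
  \sum_(i < (k + l).+1) f i * W q k l i = \sum_(i < (k + l).+1) f (k + l - i)%N * W q k l i.
Proof.
rewrite (reindex_inj rev_ord_inj) /=; apply: eq_bigr => i _.
by rewrite subSS W_sym // -ltnS ltn_ord.
Qed.

Lemma Fq0 q k l : 0 <= q -> Fq q 0 k l = 1.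
Proof.
move=> q0; rewrite Fq_E; under eq_bigr do rewrite bin0 mul1r.
by rewrite -/(Dn q k l) mulfV // gt_eqF // Dn_gt0.
Qed.

Lemma Fq1 q k l : 0 <= q -> Fq q 1 k l = (k + l)%N%:R / 2.
Proof.
move=> q0; rewrite Fq_E; under eq_bigr do rewrite bin1.
have D0 := Dn_gt0 k l q0.
have E : 2 * (\sum_(i < (k + l).+1) i%:R * W q k l i) = (k + l)%N%:R * Dn q k l.
  rewrite mulr2n mulrDl mul1r.
  rewrite {2}(@rev_sum q k l (fun i => i%:R)) -big_split /= /Dn mulr_sumr.
  apply: eq_bigr => i _; by rewrite -mulrDl -natrD subnKC // -ltnS ltn_ord.
have -> : \sum_(i < (k + l).+1) i%:R * W q k l i = (k + l)%N%:R * Dn q k l / 2.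
  apply: (@mulfI _ 2); first by rewrite pnatr_eq0.
  by rewrite E; field.
field; by rewrite gt_eqF.
Qed.


Lemma W1 k l i : W 1 k l i = (1 + minn (minn k l) (minn i (k + l - i)))%N%:R.
Proof. by rewrite /W expr1n mulr1. Qed.

Lemma num1 kk k l : \sum_(i < (k + l).+1) 'C(i, kk)%:R * W 1 k l i =
  (\sum_(x < k.+1) \sum_(y < l.+1) 'C(x + y, kk))%N%:R.
Proof.
rewrite (sum_conv (fun i => 'C(i, kk))) natr_sum; apply: eq_bigr => i _.
by rewrite W1 natrM.
Qed.

Lemma vand2 kk k l : (\sum_(x < k.+1) \sum_(y < l.+1) 'C(x + y, kk) =
  \sum_(j < kk.+1) 'C(k.+1, j.+1) * 'C(l.+1, (kk - j).+1))%N.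
Proof.
transitivity (\sum_(x < k.+1) \sum_(y < l.+1) \sum_(j < kk.+1) 'C(x, j) * 'C(y, kk - j))%N.
  by apply: eq_bigr => x _; apply: eq_bigr => y _; rewrite binomial.Vandermonde.
rewrite (eq_bigr (fun x : 'I_k.+1 => \sum_(j < kk.+1) \sum_(y < l.+1) 'C(x, j) * 'C(y, kk - j))%N);
  last by move=> x _; rewrite exchange_big.
rewrite exchange_big /=; apply: eq_bigr => j _.
rewrite -!hockey big_distrl /=; apply: eq_bigr => x _.
by rewrite big_distrr.
Qed.

Lemma Fq_one kk k l : Fq 1 kk k l =
  \sum_(j < kk.+1) ('C(k, j)%:R / j.+1%:R) * ('C(l, kk - j)%:R / (kk - j).+1%:R).
Proof.
rewrite Fq_E num1.
have -> : Dn 1 k l = (k.+1 * l.+1)%N%:R.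
  rewrite /Dn (eq_bigr (fun i : 'I_(k + l).+1 => 'C(i, 0)%:R * W 1 k l i)); last first.
    by move=> i _; rewrite bin0 mul1r.
  rewrite num1; congr (_%:R).
  rewrite (eq_bigr (fun _ => l.+1)) ?sum_nat_const ?card_ord //.
  by move=> x _; rewrite (eq_bigr (fun _ => 1%N)) ?sum_nat_const ?card_ord ?muln1 // => y _; rewrite bin0.
rewrite vand2 natr_sum mulr_suml; apply: eq_bigr => j _.
have hX := mul_bin_diag k.+1 j; have hY := mul_bin_diag l.+1 (kk - j).
move: hX hY => /(congr1 (fun n => n%:R : R)) hX /(congr1 (fun n => n%:R : R)) hY.
rewrite !natrM /= in hX hY *.
have h1 : (j.+1%:R : R) != 0 by rewrite pnatr_eq0.
have h2 : ((kk - j).+1%:R : R) != 0 by rewrite pnatr_eq0.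
have h3 : (k.+1%:R : R) != 0 by rewrite pnatr_eq0.
have h4 : (l.+1%:R : R) != 0 by rewrite pnatr_eq0.
rewrite (_ : ('C(k.+1, j.+1)%:R : R) = k.+1%:R * 'C(k, j)%:R / j.+1%:R); last first.
  by rewrite hX; field.
rewrite (_ : ('C(l.+1, (kk - j).+1)%:R : R) = l.+1%:R * 'C(l, kk - j)%:R / (kk - j).+1%:R); last first.
  by rewrite hY; field.
field.
by rewrite !nat1r h1 h2 h3 h4.
Qed.


Lemma Tw_ge0 q i j k l : 0 <= q -> 0 <= Tw q i j k l.
Proof. by move=> q0; rewrite /Tw !mulr_ge0 // exprn_ge0. Qed.

Lemma T_ge0 q i j k l : 0 <= q -> 0 <= T q i j k l.
Proof.
move=> q0; rewrite /T mulr_ge0 ?Tw_ge0 // /Cq invr_ge0 sumr_ge0 // => a _.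
by rewrite sumr_ge0 // => b _; exact: Tw_ge0.
Qed.

End Real.

Local Open Scope ereal_scope.


Section Ser.
Variable R : realType.

Lemma start0 (f : nat -> \bar R) N : (forall k, 0 <= f k) ->
  (forall k, (k < N)%N -> f k = 0) -> \sum_(N <= k <oo) f k = \sum_(k <oo) f k.
Proof.
move=> f0 fz; rewrite [RHS](nneseries_split 0 N) // add0n big1_seq ?add0e //.
by move=> i /andP [_]; rewrite mem_index_iota => /andP [_ h]; exact: fz.
Qed.

Lemma trunc (f : nat -> \bar R) N : (forall k, 0 <= f k) ->
  (forall k, (N <= k)%N -> f k = 0) -> \sum_(k <oo) f k = \sum_(k < N) f k.
Proof.
move=> f0 fz; rewrite (nneseries_split 0 N) // add0n eseries0 ?adde0 ?big_mkord //.
by move=> i hi _; exact: fz.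
Qed.

Lemma ns_ge0 (f : nat -> \bar R) : (forall k, 0 <= f k) -> 0 <= \sum_(k <oo) f k.
Proof. by move=> h; apply: nneseries_ge0 => n _ _; exact: h. Qed.

Lemma swap4 (G : nat -> nat -> nat -> nat -> \bar R) : (forall i j k l, 0 <= G i j k l) ->
  \sum_(i <oo) \sum_(j <oo) \sum_(k <oo) \sum_(l <oo) G i j k l =
  \sum_(k <oo) \sum_(l <oo) \sum_(i <oo) \sum_(j <oo) G i j k l.
Proof.
move=> G0.
transitivity (\sum_(i <oo) \sum_(k <oo) \sum_(l <oo) \sum_(j <oo) G i j k l).
  apply: eq_eseriesr => i _.
  rewrite (@nneseries_interchange _ (fun j k => \sum_(l <oo) G i j k l)); last first.
    by move=> j k; apply: ns_ge0.
  apply: eq_eseriesr => k _.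
  by rewrite nneseries_interchange.
rewrite (@nneseries_interchange _ (fun i k => \sum_(l <oo) \sum_(j <oo) G i j k l)); last first.
  by move=> i k; apply: ns_ge0 => l; apply: ns_ge0.
apply: eq_eseriesr => k _.
rewrite nneseries_interchange // => i l; exact: ns_ge0.
Qed.

Lemma Zl3 (x : R) (h : nat -> nat -> nat -> R) : (0 <= x)%R ->
  (forall j k l, 0 <= h j k l)%R ->
  x%:E * \sum_(j <oo) \sum_(k <oo) \sum_(l <oo) (h j k l)%:E =
  \sum_(j <oo) \sum_(k <oo) \sum_(l <oo) (x * h j k l)%:E.
Proof.
move=> x0 h0.
rewrite -nneseriesZl; last by move=> j _; apply: ns_ge0 => k; apply: ns_ge0 => l; rewrite lee_fin.
apply: eq_eseriesr => j _.
rewrite -nneseriesZl; last by move=> k _; apply: ns_ge0 => l; rewrite lee_fin.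
apply: eq_eseriesr => k _.
rewrite -nneseriesZl; last by move=> l _; rewrite lee_fin.
by apply: eq_eseriesr => l _; rewrite EFinM.
Qed.


Lemma aseqR (q : R) (p : nat -> R) kk : (0 <= q)%R -> (forall n, 0 <= p n)%R ->
  aseq (Rq q p) kk =
  \sum_(k <oo) \sum_(l <oo) (p k * p l * (Fq q kk k l / kk.+1%:R))%:E.
Proof.
move=> q0 p0.
have g0 i j k l : (0 <= T q i j k l * p k * p l)%R.
  by rewrite mulr_ge0 // mulr_ge0 // T_ge0.
have Rq0 i : 0 <= Rq q p i.
  by apply: ns_ge0 => j; apply: ns_ge0 => k; apply: ns_ge0 => l; rewrite lee_fin.
rewrite /aseq start0; last 2 first.
- by move=> i; rewrite mule_ge0 // lee_fin.
- by move=> i hi; rewrite bin_small // mul0e.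
rewrite /Rq.
have c0 : (0 <= kk.+1%:R^-1 :> R)%R by rewrite invr_ge0.
transitivity (\sum_(i<oo) \sum_(j<oo) \sum_(k<oo) \sum_(l<oo)
   (kk.+1%:R^-1 * ('C(i,kk)%:R * (T q i j k l * p k * p l)))%:E).
  transitivity ((kk.+1%:R^-1)%:E * \sum_(i<oo) \sum_(j<oo) \sum_(k<oo) \sum_(l<oo)
      ('C(i,kk)%:R * (T q i j k l * p k * p l))%:E).
    congr (_ * _); apply: eq_eseriesr => i _.
    exact: (Zl3 (ler0n _ _) (g0 i)).
  rewrite -nneseriesZl; last first.
    move=> i _; apply: ns_ge0 => j; apply: ns_ge0 => k; apply: ns_ge0 => l.
    by rewrite lee_fin mulr_ge0.
  apply: eq_eseriesr => i _.
  apply: (Zl3 c0) => j k l; exact: mulr_ge0.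
have G0 i j k l : (0 <= kk.+1%:R^-1 * ('C(i,kk)%:R * (T q i j k l * p k * p l)))%R.
  by rewrite mulr_ge0 // mulr_ge0.
rewrite swap4; last by move=> i j k l; rewrite lee_fin.
apply: eq_eseriesr => k _; apply: eq_eseriesr => l _.
set n := (k + l)%N.
have Tz i j : (n < i + j)%N -> T q i j k l = 0%R.
  by move=> h; rewrite /T Tw0 ?mulr0 //; apply/eqP; move: h; rewrite /n; lia.
under eq_eseriesr => i _.
  rewrite (@trunc _ n.+1); last 2 first.
  + by move=> j; rewrite lee_fin.
  + by move=> j hj; rewrite Tz ?mul0r ?mulr0 //; lia.
  rewrite sumEFin.
  over.
rewrite (@trunc _ n.+1); last 2 first.
- by move=> i; rewrite lee_fin sumr_ge0.
- move=> i hi; rewrite big1 // => j _; rewrite Tz ?mul0r ?mulr0 //; lia.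
rewrite sumEFin; congr (_%:E).
rewrite /Fq -/n mulr_suml mulr_sumr; apply: eq_bigr => i _.
rewrite mulr_suml mulr_sumr; apply: eq_bigr => j _.
by rewrite /=; ring.
Qed.


Lemma Fq_ge0 (q : R) kk k l : (0 <= q)%R -> (0 <= Fq q kk k l)%R.
Proof.
move=> q0; rewrite /Fq sumr_ge0 // => i _; rewrite sumr_ge0 // => j _.
by rewrite mulr_ge0 // T_ge0.
Qed.

Lemma prod_series (x y : nat -> R) (c : R) : (forall n, 0 <= x n)%R ->
  (forall n, 0 <= y n)%R -> (0 <= c)%R -> \sum_(l <oo) (y l)%:E = c%:E ->
  \sum_(k <oo) \sum_(l <oo) (x k * y l)%:E = c%:E * \sum_(k <oo) (x k)%:E.
Proof.
move=> x0 y0 c0 hy.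
transitivity (\sum_(k <oo) (c * x k)%:E).
  apply: eq_eseriesr => k _.
  transitivity ((x k)%:E * \sum_(l <oo) (y l)%:E).
    rewrite -nneseriesZl; last by move=> l _; rewrite lee_fin.
    by apply: eq_eseriesr => l _; rewrite EFinM.
  by rewrite hy -EFinM mulrC.
rewrite -nneseriesZl; last by move=> k _; rewrite lee_fin.
by apply: eq_eseriesr => k _; rewrite EFinM.
Qed.

Lemma scale_series (x : nat -> R) (S c : R) : (forall n, 0 <= x n)%R -> (0 <= c)%R ->
  \sum_(k <oo) (x k)%:E = S%:E -> \sum_(k <oo) (x k * c)%:E = (S * c)%:E.
Proof.
move=> x0 c0 h; transitivity (\sum_(k <oo) c%:E * (x k)%:E).
  by apply: eq_eseriesr => k _; rewrite -EFinM mulrC.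
rewrite nneseriesZl; last by move=> k _; rewrite lee_fin.
by rewrite h -EFinM mulrC.
Qed.

Lemma link (p : nat -> R) j : (forall n, 0 <= p n)%R ->
  aseq (fun n => (p n)%:E) j = \sum_(k <oo) (p k * ('C(k, j)%:R / j.+1%:R))%:E.
Proof.
move=> p0; rewrite /aseq start0; last 2 first.
- by move=> i; rewrite -EFinM lee_fin mulr_ge0.
- by move=> i hi; rewrite bin_small // mul0e.
rewrite -nneseriesZl; last by move=> i _; rewrite -EFinM lee_fin mulr_ge0.
apply: eq_eseriesr => i _; rewrite -!EFinM; congr (EFin _); ring.
Qed.

End Ser.

End Helpers.
Import Helpers.

Theorem proposition16 (R : realType) (alpha delta : R) (p : nat -> R) :
  (0 < alpha)%R -> (alpha <= delta)%R ->
  M1plus p -> Xad alpha delta (aseq (fun n => (p n)%:E)) ->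
  (forall q q' : R, (0 <= q)%R -> (q <= q')%R -> (q' <= 1)%R ->
     forall k : nat, aseq (Rq q p) k <= aseq (Rq q' p) k) /\
  (forall q : R, (0 <= q)%R -> (q <= 1)%R -> Xad alpha delta (aseq (Rq q p))).
Proof.
move=> ha hd [p0 psum] [hX0 [hX1 hXk]].
have mono : forall q q' : R, (0 <= q)%R -> (q <= q')%R -> (q' <= 1)%R ->
     forall k : nat, aseq (Rq q p) k <= aseq (Rq q' p) k.
  move=> q q' q0 qq q'1 kk; have q'0 : (0 <= q')%R by apply: le_trans qq.
  rewrite !aseqR //; apply: lee_nneseries => [k _ _|k _].
    by apply: ns_ge0 => l; rewrite lee_fin !mulr_ge0 ?Fq_ge0 // invr_ge0.
  apply: lee_nneseries => [l _ _|l _].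
    by rewrite lee_fin !mulr_ge0 ?Fq_ge0 // invr_ge0.
  rewrite lee_fin; apply: ler_wpM2l; first by rewrite mulr_ge0.
  by apply: ler_wpM2r; [rewrite invr_ge0 | exact: Fq_mono].
split => // q q0 q1.
split; [|split].
- rewrite aseqR //.
  transitivity (\sum_(k<oo) \sum_(l<oo) (p k * p l)%:E).
    apply: eq_eseriesr => k _; apply: eq_eseriesr => l _.
    by rewrite Fq0 // invr1 !mulr1.
  by rewrite (@prod_series _ _ _ 1) // ?psum ?mul1e.
- have SM : \sum_(l<oo) (l%:R * p l)%:E = (2 * alpha)%:E.
    move: hX1; rewrite link // => h.
    have hx n : (0 <= p n * ('C(n, 1)%:R / 1.+1%:R))%R by rewrite mulr_ge0 // divr_ge0.
    have H := @scale_series _ (fun k => p k * ('C(k, 1)%:R / 1.+1%:R))%R alpha 2 hx (ler0n _ 2) h.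
    rewrite mulrC -H.
    by apply: eq_eseriesr => l _; rewrite bin1; congr (EFin _); field.
  pose A k := (k%:R * p k / 4)%R.
  have A0 k : (0 <= A k)%R by rewrite /A divr_ge0 // mulr_ge0.
  have SA : \sum_(k<oo) (A k)%:E = (alpha / 2)%:E.
    have := @scale_series _ (fun k => k%:R * p k)%R (2 * alpha)%R (4^-1)%R _ _ SM.
    move=> H; rewrite (_ : alpha / 2 = 2 * alpha / 4)%R; last by field.
    by apply: H; [move=> n; rewrite mulr_ge0 | rewrite invr_ge0].
  rewrite aseqR //.
  transitivity (\sum_(k<oo) \sum_(l<oo) ((A k * p l)%:E + (p k * A l)%:E)).
    apply: eq_eseriesr => k _; apply: eq_eseriesr => l _.
    by rewrite Fq1 // -EFinD /A natrD; congr (EFin _); field.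
  transitivity (\sum_(k<oo) (\sum_(l<oo) (A k * p l)%:E + \sum_(l<oo) (p k * A l)%:E)).
    apply: eq_eseriesr => k _; rewrite nneseriesD // => l _ _; rewrite lee_fin mulr_ge0 //.
  rewrite nneseriesD; last 2 first.
  + by move=> k _ _; apply: ns_ge0 => l; rewrite lee_fin mulr_ge0.
  + by move=> k _ _; apply: ns_ge0 => l; rewrite lee_fin mulr_ge0.
  rewrite (@prod_series _ _ _ 1) // ?psum ?mul1e // SA.
  rewrite (@prod_series _ _ _ (alpha / 2)) // ?psum ?mule1 //; last first.
    by rewrite divr_ge0 // ltW.
  by rewrite -EFinD; congr (EFin _); field.
- move=> kk hk; split.
    rewrite aseqR //; apply: ns_ge0 => k; apply: ns_ge0 => l.
    by rewrite lee_fin !mulr_ge0 ?Fq_ge0 // invr_ge0.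
  have M1 := mono q 1%R q0 q1 (lexx 1%R) kk. apply: le_trans M1 _. 
  have d0 : (0 <= delta)%R by apply: le_trans hd; exact: ltW.
  have hb m : 0 <= aseq (fun n => (p n)%:E) m <= (delta ^+ m)%:E.
    case: m => [|[|m]].
    + by rewrite hX0 expr0 !lee_fin ler01 lexx.
    + by rewrite hX1 expr1 !lee_fin ltW.
    + by have [h1 h2] := hXk m.+2 erefl; rewrite h1 h2.
  pose a m := fine (aseq (fun n => (p n)%:E) m).
  have haE m : aseq (fun n => (p n)%:E) m = (a m)%:E.
    rewrite /a fineK //; have /andP [h1 h2] := hb m.
    by rewrite ge0_fin_numE // (le_lt_trans h2) // ltry.
  have ha0 m : (0 <= a m)%R by have /andP [h1 _] := hb m; move: h1; rewrite haE lee_fin.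
  have ha1 m : (a m <= delta ^+ m)%R by have /andP [_ h2] := hb m; move: h2; rewrite haE lee_fin.
  rewrite aseqR //.
  set c := (kk.+1%:R : R).
  have c0 : (0 < c)%R by rewrite ltr0n.
  pose b k j := (('C(k, j)%:R / j.+1%:R)%R : R).
  have b0 k j : (0 <= b k j)%R by rewrite divr_ge0.
  have E : \sum_(k<oo) \sum_(l<oo) (p k * p l * (Fq 1 kk k l / c))%:E =
      \sum_(j < kk.+1) (a (kk - j)%N / c * a j)%:E.
    transitivity (\sum_(k<oo) \sum_(l<oo) \sum_(j < kk.+1)
       ((p k * b k j) * (p l * b l (kk - j)%N / c))%:E).
      apply: eq_eseriesr => k _; apply: eq_eseriesr => l _.
      rewrite sumEFin Fq_one mulr_suml mulr_sumr; congr (EFin _).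
      by apply: eq_bigr => j _; rewrite /b; field; rewrite !nat1r !pnatr_eq0.
    transitivity (\sum_(k<oo) \sum_(j < kk.+1) \sum_(l<oo)
       ((p k * b k j) * (p l * b l (kk - j)%N / c))%:E).
      apply: eq_eseriesr => k _; apply: nneseries_sum => j l _.
      by rewrite lee_fin !mulr_ge0 // invr_ge0 ltW.
    rewrite nneseries_sum; last first.
      by move=> j k _; apply: ns_ge0 => l; rewrite lee_fin !mulr_ge0 // invr_ge0 ltW.
    apply: eq_bigr => j _.
      have hy : \sum_(l<oo) (p l * b l (kk - j)%N / c)%:E = (a (kk - j)%N / c)%:E.
        apply: scale_series; first by move=> n; rewrite mulr_ge0.
          by rewrite invr_ge0 ltW.
        by rewrite -haE link.
      rewrite (prod_series _ _ _ hy); last 3 first.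
      + by move=> n; rewrite mulr_ge0.
      + by move=> n; rewrite !mulr_ge0 // invr_ge0 ltW.
      + by rewrite divr_ge0 // ltW.
      by rewrite -link // haE -EFinM.
  rewrite E.
  rewrite sumEFin lee_fin.
  apply: (@le_trans _ _ (\sum_(j < kk.+1) (delta ^+ kk / c))%R).
    apply: ler_sum => j _.
    have hj : (j <= kk)%N by rewrite -ltnS ltn_ord.
    rewrite (_ : delta ^+ kk = delta ^+ (kk - j) * delta ^+ j)%R; last by rewrite -exprD subnK.
    rewrite [X in (X <= _)%R]mulrAC.
    apply: ler_wpM2r; first by rewrite invr_ge0 ltW.
    by apply: ler_pM.
  rewrite sumr_const card_ord -mulr_natr -mulrA mulVf ?mulr1 //.
  by rewrite /c pnatr_eq0.
Qed.
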